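(* Let $\Gamma$ be a finite normal-form game and let $\vec\sigma$ be a non-degenerate Nash equilibrium of $\Gamma$. Then $\vec\sigma$ is strongly punishable: for every $\epsilon>0$ there exists $\delta>0$ such that for every game $\Gamma'=(P,A,U')$ with $d(\Gamma,\Gamma')<\delta$ there is a Nash equilibrium $\vec\sigma'$ of $\Gamma'$ with $\sigma_i'(A_i)=\sigma_i(A_i)$ for all $i\in P$ and $u_i'(\vec\sigma')-u_i(\vec\sigma)<\epsilon$ for all $i\in P$.
   Context: A finite normal-form game is $\Gamma=(P,A,U)$ with players $P=\{1,\dots,n\}$, action profiles $A=A_1\times\cdots\times A_n$ where $A_i=\{a_i^1,\dots,a_i^{N_i}\}$ is finite, and $U=(u_1,\dots,u_n)$ with $u_i:A\to\mathbb R$. Utilities are extended to mixed strategy profiles by expectation; $\sigma_i^j$ denotes the probability that $\sigma_i$ assigns to $a_i^j$, and $\sigma_i(A_i)$ the support of $\sigma_i$. The distance between games $\Gamma=(P,A,U)$ and $\Gamma'=(P',A',U')$ is $d(\Gamma,\Gamma')=+\infty$ if $P\neq P'$ or $A\neq A'$, and $d(\Gamma,\Gamma')=\max_{i\in P,\vec a\in A}|u_i(\vec a)-u_i'(\vec a)|$ otherwise. Non-degeneracy: let $\vec\sigma$ be a Nash equilibrium with actions labelled so that $\sigma_i(A_i)=\{a_i^1,\dots,a_i^{M_i}\}$. For variables $\vec p=(p_i^k)_{i\in P,\,1\le k\le M_i}$ write $u_i(a,\vec p_{-i}):=\sum u_i(a,(a_j^{k_j})_{j\ne i})\prod_{j\neq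 i}p_j^{k_j}$, the sum over all choices $k_j\le M_j$ ($j\ne i$). The characteristic function $f_{\vec\sigma}:\mathbb R^{\sum_i M_i}\to\mathbb R^{\sum_i M_i}$ has components $\sum_{k=1}^{M_i}p_i^k$ for each $i\in P$, and $u_i(a_i^1,\vec p_{-i})-u_i(a_i^k,\vec p_{-i})$ for each $i\in P$ and $2\le k\le M_i$. The residual function $r_{\vec\sigma}$ has components $u_i(a_i^1,\vec p_{-i})-u_i(a_i^k,\vec p_{-i})$ for each $i\in P$ and $M_i<k\le N_i$. $\vec\sigma$ is non-degenerate if the Jacobian determinant $|Df_{\vec\sigma}(\vec\sigma)|\neq 0$ (evaluating at the vector of probabilities of $\vec\sigma$) and every component of $r_{\vec\sigma}(\vec\sigma)$ is strictly positive. *)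

(* Defs.v *)
From HB Require Import structures.
From mathcomp Require Import all_boot all_order all_algebra.
From mathcomp Require Import all_classical all_reals all_analysis.
Set Implicit Arguments. Unset Strict Implicit. Unset Printing Implicit Defensive.
Import Order.TTheory GRing.Theory Num.Theory.
Local Open Scope ring_scope.

(* A game with players I and actions A is given by its utility functions   *)
(* u : I -> profile -> R.  (Games with different P or A are at distance     *)
(* +oo, so only games on the same (I, A) can be delta-close.)               *)

Definition profile (I : finType) (A : I -> finType) := {dffun forall i, A i}.

Definition game_dist (R : realType) (I : finType) (A : I -> finType)
  (u u' : I -> profile A -> R) : R :=
  \big[Num.max/0]_(i : I) \big[Num.max/0]_(a : profile A) `|u i a - u' i a|.

Definition mixed (R : realType) (I : finType) (A : I -> finType)
  (sigma : forall i, A i -> R) : Prop :=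
  (forall i a, 0 <= sigma i a) /\ (forall i, \sum_(a : A i) sigma i a = 1).

Definition mixed_i (R : realType) (I : finType) (A : I -> finType) (i : I)
  (tau : A i -> R) : Prop :=
  (forall a, 0 <= tau a) /\ \sum_(a : A i) tau a = 1.

Definition EU (R : realType) (I : finType) (A : I -> finType)
  (u : I -> profile A -> R) (sigma : forall i, A i -> R) (i : I) : R :=
  \sum_(b : profile A) u i b * \prod_(j : I) sigma j (b j).

Definition EUdev (R : realType) (I : finType) (A : I -> finType)
  (u : I -> profile A -> R) (q : forall i, A i -> R) (i : I) (a : A i) : R :=
  \sum_(b : profile A | b i == a) u i b * \prod_(j : I | j != i) q j (b j).

Definition nash_eq (R : realType) (I : finType) (A : I -> finType)
  (u : I -> profile A -> R) (sigma : forall i, A i -> R) : Prop :=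
  mixed sigma /\
  forall (i : I) (tau : A i -> R), mixed_i tau ->
    EU u (@dfwith I (fun j => A j -> R) sigma i tau) i <= EU u sigma i.

Definition suppT (R : realType) (I : finType) (A : I -> finType)
  (sigma : forall i, A i -> R) : {pred {i : I & A i}} :=
  [pred x | 0 < sigma (tag x) (tagged x)].

Definition nvars (R : realType) (I : finType) (A : I -> finType)
  (sigma : forall i, A i -> R) : nat := #|suppT sigma|.

Definition var_of (R : realType) (I : finType) (A : I -> finType)
  (sigma : forall i, A i -> R) (r : 'I_(nvars sigma)) : {i : I & A i} :=
  @enum_val _ (suppT sigma) r.

Definition pfun (R : realType) (I : finType) (A : I -> finType)
  (sigma : forall i, A i -> R) (p : 'rV[R]_(nvars sigma)) : forall i, A i -> R :=
  fun i a => \sum_(r < nvars sigma | var_of r == Tagged A a) p 0 r.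

(* the characteristic function f_sigma; ref i plays the role of a_i^1.
   Component indexed by (i,a): sum_{b in supp sigma_i} p_i^b if a = ref i,
   and u_i(ref i, p_{-i}) - u_i(a, p_{-i}) otherwise. *)
Definition charf (R : realType) (I : finType) (A : I -> finType)
  (u : I -> profile A -> R) (sigma : forall i, A i -> R) (ref : forall i, A i)
  (p : 'rV[R]_(nvars sigma)) : 'rV[R]_(nvars sigma) :=
  \row_r (let x := var_of r in
          if tagged x == ref (tag x) then
            \sum_(b : A (tag x) | 0 < sigma (tag x) b) pfun p b
          else EUdev u (pfun p) (ref (tag x)) - EUdev u (pfun p) (tagged x)).

Definition sigvec (R : realType) (I : finType) (A : I -> finType)
  (sigma : forall i, A i -> R) : 'rV[R]_(nvars sigma) :=
  \row_r sigma (tag (var_of r)) (tagged (var_of r)).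

Definition char_jacobian (R : realType) (I : finType) (A : I -> finType)
  (u : I -> profile A -> R) (sigma : forall i, A i -> R) (ref : forall i, A i)
  : 'M[R]_(nvars sigma) :=
  \matrix_(r, c)
    derive1 (fun t : R => charf u ref (sigvec sigma + t *: delta_mx 0 c) 0 r) 0.

(* non-degenerate Nash equilibrium (for some labelling of the actions making
   the support {a_i^1..a_i^{M_i}}, with ref i = a_i^1) *)
Definition nondeg_NE (R : realType) (I : finType) (A : I -> finType)
  (u : I -> profile A -> R) (sigma : forall i, A i -> R) : Prop :=
  nash_eq u sigma /\
  exists ref : forall i, A i,
    (forall i, 0 < sigma i (ref i)) /\
    \det (char_jacobian u sigma ref) != 0 /\
    (forall (i : I) (a : A i), ~~ (0 < sigma i a) ->
       0 < EUdev u sigma (ref i) - EUdev u sigma a).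

(* Main.v *)
Require Import Defs.
From HB Require Import structures.
From mathcomp Require Import all_boot all_order all_algebra.
From mathcomp Require Import all_classical all_reals all_analysis.
From mathcomp Require Import ring lra.
Set Implicit Arguments. Unset Strict Implicit. Unset Printing Implicit Defensive.
Import Order.TTheory GRing.Theory Num.Theory.
Local Open Scope ring_scope.



Section Gen.
Context (R : realType).

Lemma prod_affine (J : finType) (P : pred J) (X Y : J -> R) (j0 : J) (t : R) :
  (forall j, j != j0 -> Y j = 0) ->
  \prod_(j | P j) (X j + t * Y j) =
  \prod_(j | P j) X j + t * (\prod_(j | P j) (X j + Y j) - \prod_(j | P j) X j).
Proof.
move=> HY.
have E1 : forall c, \prod_(j | P j && (j != j0)) (X j + c * Y j) = \prod_(j | P j && (j != j0)) X j.
  by move=> c; apply: eq_bigr => j /andP[_ /HY ->]; rewrite mulr0 addr0.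
case Pj0: (P j0).
  have HD : forall F : J -> R, \prod_(j | P j) F j = F j0 * \prod_(j | P j && (j != j0)) F j.
    by move=> F; rewrite (bigD1 j0).
  have E1' : \prod_(j | P j && (j != j0)) (X j + Y j) = \prod_(j | P j && (j != j0)) X j.
    by rewrite -(E1 1); apply: eq_bigr => j _; rewrite mul1r.
  rewrite !HD E1 E1'; ring.
have E2 : forall c, \prod_(j | P j) (X j + c * Y j) = \prod_(j | P j) X j.
  move=> c; apply: eq_bigr => j Pj; rewrite HY ?mulr0 ?addr0 //.
  by apply: contraTneq Pj => ->; rewrite Pj0.
have E2' : \prod_(j | P j) (X j + Y j) = \prod_(j | P j) X j.
  by rewrite -(E2 1); apply: eq_bigr => j _; rewrite mul1r.
rewrite E2 E2'; ring.
Qed.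

Lemma prod_bound (J : Type) (l : seq J) (P : pred J) (X : J -> R) (B : R) :
  1 <= B -> (forall j, `|X j| <= B) ->
  `|\prod_(j <- l | P j) X j| <= B ^+ size l.
Proof.
move=> B1 HX; elim: l => [|j l IH]; first by rewrite big_nil normr1 expr0.
rewrite big_cons /= exprS; case: (P j).
  rewrite normrM; apply: ler_pM => //; exact: normr_ge0.
apply: (le_trans IH); rewrite ler_peMl //; last by apply: exprn_ge0; apply: le_trans B1.
Qed.

Lemma prod_diff (J : Type) (l : seq J) (P : pred J) (X Y : J -> R) (B rho : R) :
  1 <= B -> 0 <= rho -> (forall j, `|X j| <= B) -> (forall j, `|Y j| <= B) ->
  (forall j, `|X j - Y j| <= rho) ->
  `|\prod_(j <- l | P j) X j - \prod_(j <- l | P j) Y j| <= (size l)%:R * B ^+ size l * rho.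
Proof.
move=> B1 r0 HX HY HXY; have B0 : 0 <= B by apply: le_trans B1.
elim: l => [|j l IH]; first by rewrite !big_nil subrr normr0 mul0r mul0r.
rewrite !big_cons /=.
have Bl : 0 <= B ^+ size l by apply: exprn_ge0.
case: (P j); last first.
  apply: (le_trans IH); apply: ler_wpM2r => //; apply: ler_pM => //; rewrite ?ler_nat // exprS ler_peMl //.



set PX := \prod_(j <- l | P j) X j; set PY := \prod_(j <- l | P j) Y j.
have -> : X j * PX - Y j * PY = X j * (PX - PY) + (X j - Y j) * PY by ring.
apply: (le_trans (ler_normD _ _)); rewrite !normrM.
have HPY : `|PY| <= B ^+ size l by apply: prod_bound.
apply: le_trans (lerD (ler_pM (normr_ge0 _) (normr_ge0 _) (HX j) IH)
                     (ler_pM (normr_ge0 _) (normr_ge0 _) (HXY j) HPY)) _.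
have : rho * B ^+ size l <= rho * (B * B ^+ size l).
  by apply: ler_wpM2l => //; rewrite ler_peMl.
rewrite exprS -natr1; nra.
Qed.

End Gen.



Section Game.
Context (R : realType) (I : finType) (A : I -> finType).
Implicit Types (w : I -> profile A -> R) (q : forall i, A i -> R).

Lemma EU_decomp w q i : EU w q i = \sum_(a : A i) q i a * EUdev w q a.
Proof.
rewrite /EU /EUdev (partition_big (fun b : profile A => b i) xpredT) //=.
apply: eq_bigr => a _; rewrite mulr_sumr; apply: eq_bigr => b /eqP <-.
rewrite (bigD1 i) //=; ring.
Qed.

Lemma EUdev_dfwith w q i (tau : A i -> R) (a : A i) :
  EUdev w (@dfwith I (fun j => A j -> R) q i tau) a = EUdev w q a.
Proof.
apply: eq_bigr => b _; congr (_ * _); apply: eq_bigr => j ji.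
by rewrite dfwithout // eq_sym.
Qed.

Lemma EUdev_ext w q q' i (a : A i) : (forall j b, q j b = q' j b) ->
  EUdev w q a = EUdev w q' a.
Proof. by move=> H; apply: eq_bigr => b _; congr (_ * _); apply: eq_bigr => j _. Qed.

Lemma EUdev_affine w q (E : forall i, A i -> R) (j0 : I) (t : R) i (a : A i) :
  (forall j b, j != j0 -> E j b = 0) ->
  EUdev w (fun j b => q j b + t * E j b) a =
  EUdev w q a + t * (EUdev w (fun j b => q j b + E j b) a - EUdev w q a).
Proof.
move=> HE; rewrite /EUdev.
transitivity (\sum_(b : profile A | b i == a)
   (w i b * \prod_(j | j != i) q j (b j) +
    t * (w i b * \prod_(j | j != i) (q j (b j) + E j (b j)) -
         w i b * \prod_(j | j != i) q j (b j)))).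
  apply: eq_bigr => b _.
  rewrite (@prod_affine _ _ (fun j => j != i) (fun j => q j (b j)) (fun j => E j (b j)) j0 t);
    first ring.
  by move=> j; apply: HE.
by rewrite big_split /= -mulr_sumr sumrB.
Qed.

Definition Cu w := \sum_i \sum_(b : profile A) `|w i b|.
Definition nI := size (index_enum I).
Definition Kc w := #|profile A|%:R * 4 ^+ nI * (1 + Cu w * nI%:R).

Lemma Cu_ge0 w : 0 <= Cu w.
Proof. by apply: sumr_ge0 => i _; apply: sumr_ge0 => b _. Qed.

Lemma Cu_le w i b : `|w i b| <= Cu w.
Proof.
rewrite /Cu (bigD1 i) //= (bigD1 b) //= -addrA lerDl.
apply: addr_ge0; first by apply: sumr_ge0.
by apply: sumr_ge0 => j _; apply: sumr_ge0.
Qed.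

Lemma Kc_ge0 w : 0 <= Kc w.
Proof.
apply: mulr_ge0; first by apply: mulr_ge0 => //; apply: exprn_ge0.
by apply: addr_ge0 => //; apply: mulr_ge0 => //; apply: Cu_ge0.
Qed.

Lemma EUdev_close u w q (y : forall i, A i -> R) (rho delta : R) i (a : A i) :
  0 <= rho -> rho <= 1 -> 0 <= delta ->
  (forall i b, `|w i b - u i b| <= delta) ->
  (forall j b, `|y j b| <= 3) -> (forall j b, `|q j b - y j b| <= rho) ->
  `|EUdev w q a - EUdev u y a| <= Kc u * (rho + delta).
Proof.
move=> r0 r1 d0 Hw Hy Hqy.
have Hq : forall j b, `|q j b| <= 4.
  move=> j b; have -> : q j b = (q j b - y j b) + y j b by ring.
  apply: (le_trans (ler_normD _ _)).
  have -> : (4 : R) = 1 + 3 by [].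
  by apply: lerD => //; apply: le_trans (Hqy j b) r1.
have H4 : (1 : R) <= 4 by lra.
have B0 : 0 <= (4 : R) ^+ nI by apply: exprn_ge0.
set c := 4 ^+ nI * (1 + Cu u * nI%:R) * (rho + delta).
have Hb : forall b : profile A,
    `|w i b * \prod_(j | j != i) q j (b j) - u i b * \prod_(j | j != i) y j (b j)| <= c.
  move=> b.
  set PQ := \prod_(j | j != i) q j (b j); set PY := \prod_(j | j != i) y j (b j).
  have -> : w i b * PQ - u i b * PY = (w i b - u i b) * PQ + u i b * (PQ - PY) by ring.
  have hPQ : `|PQ| <= 4 ^+ nI by apply: prod_bound.
  have hD : `|PQ - PY| <= nI%:R * 4 ^+ nI * rho.
    apply: prod_diff => // j; apply: le_trans (Hy _ _) _; lra.
  apply: (le_trans (ler_normD _ _)); rewrite !normrM.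
  have h1 := ler_pM (normr_ge0 _) (normr_ge0 _) (Hw i b) hPQ.
  have h2 := ler_pM (normr_ge0 _) (normr_ge0 _) (Cu_le u i b) hD.
  apply: (le_trans (lerD h1 h2)); rewrite /c.
  have hC := Cu_ge0 u.
  have hn : 0 <= (nI%:R : R) by [].
  set K := 4 ^+ nI in B0 *; set C := Cu u; set N := nI%:R in hn *.
  have e1 : 0 <= C * N * K * delta by rewrite !mulr_ge0.
  have e2 : 0 <= K * rho by rewrite mulr_ge0.
  nra.
rewrite /EUdev -sumrB.
apply: (le_trans (ler_norm_sum _ _ _)).
have c0 : 0 <= c.
  by rewrite /c !mulr_ge0 // ?addr_ge0 // ?mulr_ge0 // Cu_ge0.
apply: (le_trans (ler_sum _ (fun b _ => Hb b))).
apply: (@le_trans _ _ (\sum_(b : profile A) c)).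
  rewrite [leRHS](bigID (fun b : profile A => b i == a)) /= lerDl.
  by rewrite sumr_ge0.
rewrite sumr_const -mulr_natl /Kc /c -!mulrA. apply: ler_wpM2r; first by rewrite /c -!mulrA in c0.
by rewrite ler_nat max_card.
Qed.

End Game.



Lemma mx_coord_le (R : realType) (m : nat) (v : 'rV[R]_m) (i : 'I_m) : `|v 0 i| <= `|v|.
Proof.
rewrite [leRHS]/Num.Def.normr /= mx_normrE.
exact: (le_bigmax _ (fun ij : 'I_1 * 'I_m => `|v ij.1 ij.2|) (0, i)).
Qed.

Lemma mx_le_coord (R : realType) (m : nat) (v : 'rV[R]_m) (e : R) :
  0 <= e -> (forall i, `|v 0 i| <= e) -> `|v| <= e.
Proof.
move=> e0 H; rewrite /Num.Def.normr /= mx_normrE.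
by apply: bigmax_le => // -[x y] _ /=; rewrite (ord1 x).
Qed.

Section Sig.
Context (R : realType) (I : finType) (A : I -> finType) (sigma : forall i, A i -> R).
Arguments sigma : clear implicits.
Local Notation n := (nvars sigma).
Local Notation V := 'rV[R]_(nvars sigma).

Lemma pfun_in (p : V) (r : 'I_n) i (a : A i) :
  var_of r = Tagged A a -> pfun p a = p 0 r.
Proof.
move=> H; rewrite /pfun -H (big_pred1 r) // => r'.
by apply/eqP/eqP => [/enum_val_inj|->].
Qed.

Lemma pfun_out (p : V) i (a : A i) : ~~ (0 < sigma i a) -> pfun p a = 0.
Proof.
move=> H; rewrite /pfun big_pred0 // => r'; apply/negbTE/eqP => E.
have := enum_valP r'; rewrite /var_of in E; rewrite E => H'.
exact: (negP H H').
Qed.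

Lemma var_ex i (a : A i) : 0 < sigma i a -> exists r : 'I_n, var_of r = Tagged A a.
Proof.
move=> H.
have Hin : Tagged A a \in suppT sigma by rewrite inE.
by exists (enum_rank_in Hin (Tagged A a)); rewrite /var_of enum_rankK_in.
Qed.

Lemma pfunD (p q : V) i (a : A i) : pfun (p + q) a = pfun p a + pfun q a.
Proof. by rewrite /pfun -big_split; apply: eq_bigr => r _; rewrite mxE. Qed.

Lemma pfunZ (t : R) (p : V) i (a : A i) : pfun (t *: p) a = t * pfun p a.
Proof. by rewrite /pfun mulr_sumr; apply: eq_bigr => r _; rewrite mxE. Qed.

Lemma pfun_delta (c : 'I_n) j (b : A j) : j != tag (var_of c) ->
  pfun (delta_mx 0 c : V) b = 0.
Proof.
move=> Hj; have [Hs|Hs] := boolP (0 < sigma j b); last by apply: pfun_out.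
have [r Hr] := var_ex Hs; rewrite (pfun_in _ Hr) mxE /=.
by case: eqP => // rc; move: Hj; rewrite -rc Hr /= eqxx => /negP [].
Qed.

Lemma pfun_s i (a : A i) : (forall i a, 0 <= sigma i a) -> pfun (sigvec sigma) a = sigma i a.
Proof.
move=> H0; have [Hs|Hs] := boolP (0 < sigma i a).
  by have [r Hr] := var_ex Hs; rewrite (pfun_in _ Hr) mxE Hr.
rewrite pfun_out //; apply/eqP; by rewrite eq_le H0 /= leNgt.
Qed.

Lemma pfun_dist (p q : V) i (a : A i) : `|pfun p a - pfun q a| <= `|p - q|.
Proof.
have [Hs|Hs] := boolP (0 < sigma i a).
  have [r Hr] := var_ex Hs; rewrite !(pfun_in _ Hr).
  have -> : p 0 r - q 0 r = (p - q) 0 r by rewrite !mxE.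
  exact: mx_coord_le.
rewrite !pfun_out // subrr normr0; exact: normr_ge0.
Qed.

Lemma derive1_affine (a b : R) : derive1 (fun t : R => a + t * b) 0 = b.
Proof.
rewrite derive1E.
have -> : (fun t : R => a + t * b) = (cst a + b \o* id) by [].
rewrite deriveD // derive_cst add0r deriveMr // derive_id mulr1 //.
Qed.

Section Ref.
Context (ref : forall i, A i).

Lemma EUdev_pfun_affine (w : I -> profile A -> R) (p : V) (c : 'I_n) (t : R) i (b0 : A i) :
  EUdev w (pfun (p + t *: delta_mx 0 c)) b0 = EUdev w (pfun p) b0 +
    t * (EUdev w (pfun (p + delta_mx 0 c)) b0 - EUdev w (pfun p) b0).
Proof.
rewrite (@EUdev_ext _ _ _ w _ (fun j b => pfun p b + t * pfun (delta_mx 0 c : V) b));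
  last by move=> j b; rewrite pfunD pfunZ.
rewrite (@EUdev_affine _ _ _ w _ _ (tag (var_of c))); last by move=> j b; apply: pfun_delta.
congr (_ + _ * (_ - _)); apply: EUdev_ext => j b; by rewrite pfunD.
Qed.

Lemma charf_affine (w : I -> profile A -> R) (p : V) (c : 'I_n) (t : R) (r : 'I_n) :
  charf w ref (p + t *: delta_mx 0 c) 0 r =
  charf w ref p 0 r + t * (charf w ref (p + delta_mx 0 c) 0 r - charf w ref p 0 r).
Proof.
rewrite !mxE /=; case: ifP => _.
  rewrite (eq_bigr (fun b => pfun p b + t * pfun (delta_mx 0 c : V) b)); last first.
    by move=> b _; rewrite pfunD pfunZ.
  rewrite [X in _ = _ + _ * (X - _)](eq_bigr (fun b => pfun p b + pfun (delta_mx 0 c : V) b)); last first.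
    by move=> b _; rewrite pfunD.
  rewrite !big_split /= -mulr_sumr; ring.
rewrite !EUdev_pfun_affine; ring.
Qed.

Lemma jacobian_E (w : I -> profile A -> R) (r c : 'I_n) :
  char_jacobian w sigma ref r c =
  charf w ref (sigvec sigma + delta_mx 0 c) 0 r - charf w ref (sigvec sigma) 0 r.
Proof.
rewrite /char_jacobian mxE.
have -> : (fun t : R => charf w ref (sigvec sigma + t *: delta_mx 0 c) 0 r) =
  (fun t => charf w ref (sigvec sigma) 0 r + t * (charf w ref (sigvec sigma + delta_mx 0 c) 0 r
      - charf w ref (sigvec sigma) 0 r)).
  by apply/funext => t; rewrite charf_affine.
exact: derive1_affine.
Qed.

End Ref.
End Sig.



Lemma mx_entry_le (R : realType) (m k : nat) (M : 'M[R]_(m, k)) i j : `|M i j| <= `|M|.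
Proof.
rewrite [leRHS]/Num.Def.normr /= mx_normrE.
exact: (le_bigmax _ (fun ij : 'I_m * 'I_k => `|M ij.1 ij.2|) (i, j)).
Qed.

Lemma mulmx_norm (R : realType) (m : nat) (E : 'rV[R]_m) (K : 'M[R]_m) :
  `|E *m K| <= m%:R * `|K| * `|E|.
Proof.
apply: mx_le_coord; first by rewrite !mulr_ge0.
move=> c; rewrite mxE.
apply: (le_trans (ler_norm_sum _ _ _)).
apply: (@le_trans _ _ (\sum_(r < m) `|K| * `|E|)).
  apply: ler_sum => r _; rewrite normrM mulrC; apply: ler_pM => //.
    exact: mx_entry_le.
  exact: mx_coord_le.
rewrite sumr_const card_ord -mulr_natl; nra.
Qed.

Section Sig.
Context (R : realType) (I : finType) (A : I -> finType) (sigma : forall i, A i -> R).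
Arguments sigma : clear implicits.
Context (ref : forall i, A i).
Local Notation n := (nvars sigma).
Local Notation V := 'rV[R]_(nvars sigma).

Definition Zv (p q : V) (k : nat) : V := \row_j (if (j < k)%N then p 0 j else q 0 j).

Lemma charf_lin (w : I -> profile A -> R) (p q : V) (r : 'I_n) :
  charf w ref p 0 r - charf w ref q 0 r =
  \sum_(c < n) (p 0 c - q 0 c) *
     (charf w ref (Zv p q c + delta_mx 0 c) 0 r - charf w ref (Zv p q c) 0 r).
Proof.
have Zn : Zv p q n = p by apply/rowP => j; rewrite !mxE ltn_ord.
have Z0 : Zv p q 0 = q by apply/rowP => j; rewrite !mxE.
have step : forall c : 'I_n, Zv p q c.+1 = Zv p q c + (p 0 c - q 0 c) *: delta_mx 0 c.
  move=> c; apply/rowP => j; rewrite !mxE ltnS leq_eqVlt.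
  case: (eqVneq j c) => [->|jc]; first by rewrite eqxx ltnn /= mulr1; ring.
  by rewrite (_ : (j == c :> nat) = false) ?mulr0 ?addr0 //; exact: negbTE jc.
rewrite -{1}Z0 -{1}Zn.
have T := telescope_sumr (fun k => charf w ref (Zv p q k) 0 r) (leq0n n).
rewrite /= in T; rewrite -T big_mkord.
apply: eq_bigr => c _; rewrite step charf_affine; ring.
Qed.

Lemma pfun0 i (b : A i) : pfun (0 : V) b = 0.
Proof. by rewrite /pfun big1 // => r _; rewrite mxE. Qed.

Lemma pfun_norm (y : V) i (b : A i) : `|pfun y b| <= `|y|.
Proof. by have := pfun_dist y 0 b; rewrite pfun0 subr0 subr0. Qed.

Definition Ka := \sum_i (#|A i|%:R : R).
Definition K1 (u : I -> profile A -> R) := 2 * Kc u + Ka.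

Lemma Ka_le i : #|A i|%:R <= Ka.
Proof.
rewrite /Ka (bigD1 i) //= lerDl; exact: sumr_ge0.
Qed.

Lemma Ka_ge0 : 0 <= Ka.
Proof. exact: sumr_ge0. Qed.

Lemma charf_close (u w : I -> profile A -> R) (x y : V) (rho delta : R) (r : 'I_n) :
  0 <= rho -> rho <= 1 -> 0 <= delta -> (forall i b, `|w i b - u i b| <= delta) ->
  `|y| <= 2 -> `|x - y| <= rho ->
  `|charf w ref x 0 r - charf u ref y 0 r| <= K1 u * (rho + delta).
Proof.
move=> r0 r1 d0 Hw Hy Hxy.
have hK := Kc_ge0 u; have hA := Ka_ge0.
rewrite !mxE /=; case: ifP => _.
  rewrite -sumrB; apply: (le_trans (ler_norm_sum _ _ _)).
  apply: (@le_trans _ _ (\sum_(b : A (tag (var_of r))) rho)).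
    rewrite [leRHS](bigID (fun b => 0 < sigma (tag (var_of r)) b)) /=.
    apply: ler_wpDr; first exact: sumr_ge0.
    by apply: ler_sum => b _; apply: le_trans (pfun_dist _ _ _) Hxy.
  rewrite sumr_const -mulr_natl /K1.
  have hk := Ka_le (tag (var_of r)).
  have hcard : (#|(xpredT : pred (A (tag (var_of r))))|%:R : R) <= Ka by apply: le_trans hk; rewrite ler_nat max_card.
  nra.
set E1 := EUdev w _ _; set E2 := EUdev w _ _; set E3 := EUdev u _ _; set E4 := EUdev u _ _.
have -> : E1 - E2 - (E3 - E4) = (E1 - E3) - (E2 - E4) by ring.
have Hyb : forall j (b : A j), `|pfun y b| <= 3.
  by move=> j b; apply: le_trans (pfun_norm _ _) _; apply: le_trans Hy _; lra.
have Hxyb : forall j (b : A j), `|pfun x b - pfun y b| <= rho.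
  by move=> j b; apply: le_trans (pfun_dist _ _ _) Hxy.
have h1 : `|E1 - E3| <= Kc u * (rho + delta) by apply: EUdev_close.
have h2 : `|E2 - E4| <= Kc u * (rho + delta) by apply: EUdev_close.
apply: (le_trans (ler_normB _ _)).
rewrite /K1; nra.
Qed.

Lemma delta_norm (c : 'I_n) : `|delta_mx 0 c : V| <= 1.
Proof.
apply: mx_le_coord => // j; rewrite mxE.
by case: (_ && _); rewrite ?normr1 ?normr0.
Qed.

Lemma sigvec_norm : (forall i a, 0 <= sigma i a) -> (forall i a, sigma i a <= 1) ->
  `|sigvec sigma| <= 1.
Proof.
move=> H0 H1; apply: mx_le_coord => // j; rewrite mxE ger0_norm //.
Qed.

Lemma Zv_dist (p q s : V) rho c : `|p - s| <= rho -> `|q - s| <= rho -> `|Zv p q c - s| <= rho.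
Proof.
move=> hp hq; apply: mx_le_coord; first by apply: le_trans hp; apply: normr_ge0.
move=> j; rewrite !mxE; case: ifP => _.
  by apply: le_trans hp; have := mx_coord_le (p - s) j; rewrite !mxE.
by apply: le_trans hq; have := mx_coord_le (q - s) j; rewrite !mxE.
Qed.

Lemma lin_err (u w : I -> profile A -> R) (p q : V) (rho delta : R) (r : 'I_n) :
  0 <= rho -> rho <= 1 -> 0 <= delta -> (forall i b, `|w i b - u i b| <= delta) ->
  (forall i a, 0 <= sigma i a) -> (forall i a, sigma i a <= 1) ->
  `|p - sigvec sigma| <= rho -> `|q - sigvec sigma| <= rho ->
  `|charf w ref p 0 r - charf w ref q 0 r - ((p - q) *m (char_jacobian u sigma ref)^T) 0 r|
    <= n%:R * (2 * K1 u * (rho + delta)) * `|p - q|.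
Proof.
move=> r0 r1 d0 Hw H0 H1 hp hq.
set s := sigvec sigma.
have hs : `|s| <= 1 by apply: sigvec_norm.
rewrite charf_lin [((p - q) *m _) 0 r]mxE.
rewrite [X in _ - X](eq_bigr (fun c => (p 0 c - q 0 c) *
   (charf u ref (s + delta_mx 0 c) 0 r - charf u ref s 0 r))); last first.
  by move=> c _; rewrite [X in _ * X]mxE jacobian_E [(p - q) 0 c]mxE [(- q) 0 c]mxE.
rewrite -sumrB.
have hK1 : 0 <= K1 u by apply: addr_ge0; [apply: mulr_ge0 => //; apply: Kc_ge0 | apply: Ka_ge0].
apply: (le_trans (ler_norm_sum _ _ _)).
apply: (@le_trans _ _ (\sum_(c < n) `|p - q| * (2 * K1 u * (rho + delta)))).
  apply: ler_sum => c _; rewrite -mulrBr normrM; apply: ler_pM => //.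
    by have := mx_coord_le (p - q) c; rewrite !mxE.
  set X1 := charf w ref _ 0 r; set X2 := charf w ref _ 0 r.
  set Y1 := charf u ref _ 0 r; set Y2 := charf u ref _ 0 r.
  have -> : X1 - X2 - (Y1 - Y2) = (X1 - Y1) - (X2 - Y2) by ring.
  have hZ := Zv_dist c hp hq.
  have h1 : `|X1 - Y1| <= K1 u * (rho + delta).
    apply: charf_close => //.
      apply: le_trans (ler_normD _ _) _; have := delta_norm c; lra.
    by rewrite opprD addrACA subrr addr0.
  have h2 : `|X2 - Y2| <= K1 u * (rho + delta).
    by apply: charf_close => //; lra.
  apply: (le_trans (ler_normB _ _)); lra.
by rewrite sumr_const card_ord -mulr_natl; nra.
Qed.

End Sig.



Lemma fin_min_pos (R : realType) (T : finType) (P : pred T) (f : T -> R) :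
  (forall x, P x -> 0 < f x) -> exists2 m, 0 < m & forall x, P x -> m <= f x.
Proof.
move=> H; exists (\big[Num.min/1]_(x | P x) f x).
  by apply: (big_ind (fun y => 0 < y)) => // y z hy hz; rewrite lt_min hy hz.
move=> x Px; rewrite (bigD1 x) //= ge_min lexx //.
Qed.

Section Game.
Context (R : realType) (I : finType) (A : I -> finType).
Implicit Types (w : I -> profile A -> R) (q : forall i, A i -> R).

Lemma gd_le (u w : I -> profile A -> R) i b : `|w i b - u i b| <= game_dist u w.
Proof.
rewrite distrC /game_dist.
apply: le_trans (le_bigmax _ (fun a => `|u i a - w i a|) b) _.
exact: (le_bigmax _ (fun j => \big[Num.max/0]_(a : profile A) `|u j a - w j a|) i).
Qed.

Lemma mixed_le1 (sigma : forall i, A i -> R) : mixed sigma -> forall i a, sigma i a <= 1.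
Proof.
move=> [H0 H1] i a; rewrite -(H1 i) (bigD1 a) //= lerDl.
by apply: sumr_ge0 => b _.
Qed.

Lemma sig0 (sigma : forall i, A i -> R) i (a : A i) :
  (forall i a, 0 <= sigma i a) -> ~~ (0 < sigma i a) -> sigma i a = 0.
Proof. by move=> H0 H; apply/eqP; rewrite eq_le H0 andbT leNgt. Qed.

Lemma EU_const w q i (v : R) : \sum_(a : A i) q i a = 1 ->
  (forall a : A i, q i a * EUdev w q a = q i a * v) -> EU w q i = v.
Proof.
move=> H1 H; rewrite EU_decomp (eq_bigr _ (fun a _ => H a)) -mulr_suml H1 mul1r //.
Qed.

Lemma EU_dev_le w q i (tau : A i -> R) (v : R) : mixed_i tau ->
  (forall a : A i, EUdev w q a <= v) ->
  EU w (@dfwith I (fun j => A j -> R) q i tau) i <= v.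
Proof.
move=> [H0 H1] H; rewrite EU_decomp.
apply: (@le_trans _ _ (\sum_(a : A i) tau a * v)).
  apply: ler_sum => a _; rewrite dfwithin EUdev_dfwith.
  by apply: ler_wpM2l.
by rewrite -mulr_suml H1 mul1r.
Qed.

Lemma nash_support u (sigma : forall i, A i -> R) : nash_eq u sigma ->
  forall i (a b : A i), 0 < sigma i a -> EUdev u sigma b <= EUdev u sigma a.
Proof.
move=> [[H0 H1] HN] i a b Ha.
set m := EU u sigma i.
have Hle : forall c : A i, EUdev u sigma c <= m.
  move=> c; pose tau := fun d : A i => ((d == c)%:R : R).
  have Htau : mixed_i tau.
    split; first by move=> d; rewrite /tau ler0n.
    rewrite (bigD1 c) //= /tau eqxx big1 ?addr0 // => d /negbTE ->; done.
  have := HN i tau Htau; rewrite EU_decomp.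
  rewrite (bigD1 c) //= big1 ?addr0; last first.
    by move=> d dc; rewrite dfwithin /tau (negbTE dc) mul0r.
  by rewrite dfwithin /tau eqxx mul1r EUdev_dfwith.
have Hsum : \sum_(c : A i) sigma i c * (m - EUdev u sigma c) = 0.
  rewrite (eq_bigr (fun c => sigma i c * m - sigma i c * EUdev u sigma c)); last first.
    by move=> c _; rewrite mulrBr.
  by rewrite sumrB -mulr_suml H1 mul1r /m EU_decomp subrr.
have Hnn : forall c : A i, xpredT c -> 0 <= sigma i c * (m - EUdev u sigma c).
  by move=> c _; apply: mulr_ge0 => //; rewrite subr_ge0.
have /eqP := @psumr_eq0P _ _ _ _ Hnn Hsum a isT.
rewrite mulf_eq0 (gt_eqF Ha) /= subr_eq0 => /eqP <-; exact: Hle.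
Qed.

End Game.



HB.instance Definition _ (R : realType) (m n : nat) := Complete.on 'M[R]_(m,n).

Lemma fixpoint_ball (R : realType) (n : nat) (s : 'rV[R]_n) (rho : R)
  (G : 'rV[R]_n -> 'rV[R]_n) : 0 < rho ->
  (forall p, `|s - p| <= rho -> `|s - G p| <= rho) ->
  (forall p q, `|s - p| <= rho -> `|s - q| <= rho -> `|G p - G q| <= 2^-1 * `|p - q|) ->
  exists p, `|s - p| <= rho /\ G p = p.
Proof.
move=> rho0 GU Gc.
pose U := @closed_ball _ ('rV[R]_n : completeNormedModType R) s rho.
have UE : U = (fun p : 'rV[R]_n => `|s - p| <= rho) by rewrite /U closed_ballE.
have hom : {homo G : x / U x >-> U x} by move=> x; rewrite UE; exact: GU.
pose f : {fun U >-> U} := mkfun hom.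
have q0 : (0:R) <= 2^-1 by [].
have ctr : is_contraction f.
  exists (NngNum q0); split; first by rewrite /= invf_lt1 // ltr1n.
  move=> [x y] /= [Ux Uy]; rewrite UE in Ux Uy; exact: Gc.
have [|p Up pf] := banach_fixed_point ctr (@closed_ball_closed _ ('rV[R]_n : completeNormedModType R) s rho).
  by exists s; rewrite UE /= subrr normr0 ltW.
by exists p; split; [move: Up; rewrite UE | rewrite {2}pf].
Qed.

Lemma entryBB (R : realType) (m : nat) (X Y Z : 'rV[R]_m) r :
  (X - Y - Z) 0 r = X 0 r - Y 0 r - Z 0 r.
Proof. by rewrite !mxE. Qed.

Lemma entryB (R : realType) (m : nat) (X Y : 'rV[R]_m) r : (X - Y) 0 r = X 0 r - Y 0 r.
Proof. by rewrite !mxE. Qed.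

Theorem theorem1 (R : realType) (I : finType) (A : I -> finType)
  (u : I -> profile A -> R) (sigma : forall i, A i -> R) :
  nondeg_NE u sigma ->
  forall eps : R, 0 < eps ->
  exists2 delta : R, 0 < delta &
    forall u' : I -> profile A -> R, game_dist u u' < delta ->
    exists sigma' : forall i, A i -> R,
      [/\ nash_eq u' sigma',
          (forall (i : I) (a : A i), (0 < sigma' i a) = (0 < sigma i a)) &
          (forall i : I, EU u' sigma' i - EU u sigma i < eps)].
Proof.
move=> [HN [ref [Href [Hdet Hstrict]]]] eps eps0.
have Hmix := HN.1.
have H0 : forall i a, 0 <= sigma i a := Hmix.1.
have H1 := mixed_le1 Hmix.
pose s := sigvec sigma.
pose J := char_jacobian u sigma ref.
have HJ : J^T \in unitmx by rewrite unitmxE det_tr unitfE.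
pose K := invmx J^T.
pose T := charf u ref s.
pose n' := (nvars sigma)%:R : R.
pose kK := `|K|.
have [m0 m0p Hm0] := @fin_min_pos R _ (fun x : {i : I & A i} => 0 < sigma (tag x) (tagged x))
   (fun x => sigma (tag x) (tagged x)) (fun x h => h).
have [g0 g0p Hg0] := @fin_min_pos R _ (fun x : {i : I & A i} => ~~ (0 < sigma (tag x) (tagged x)))
   (fun x => EUdev u sigma (ref (tag x)) - EUdev u sigma (tagged x))
   (fun x h => Hstrict _ _ h).
have hKc := Kc_ge0 u.
have hK1 : 0 <= K1 u by apply: addr_ge0; [apply: mulr_ge0 => //; apply: Kc_ge0 | apply: Ka_ge0].
have hn : 0 <= n' by rewrite /n' ler0n.
have hkK : 0 <= kK by apply: normr_ge0.
pose P := 2 * K1 u * n' * n' * kK.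
pose Q := n' * kK * K1 u.
have hP : 0 <= P by rewrite /P !mulr_ge0.
have hQ : 0 <= Q by rewrite /Q !mulr_ge0.
pose B := 1 + P + 2 * Kc u + Q.
have hB1 : 1 <= B by rewrite /B; lra.
have hB0 : 0 < B by lra.
pose rho := Num.min (Num.min (1 / (8 * B)) (m0 / 2)) (Num.min (g0 / (4 * B)) (eps / (4 * B))).
have rho0 : 0 < rho.
  by rewrite /rho !lt_min !divr_gt0 // ?mulr_gt0.
have := lexx rho; rewrite {2}/rho !le_min => /andP[/andP[h1 h2] /andP[h3 h4]].
have rB : rho * (8 * B) <= 1 by rewrite -ler_pdivlMr ?mulr_gt0 // -[X in _ <= X / _]mul1r.
have r2 : rho * 2 <= m0 by rewrite -ler_pdivlMr.
have r3 : rho * (4 * B) <= g0 by rewrite -ler_pdivlMr ?mulr_gt0.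
have r4 : rho * (4 * B) <= eps by rewrite -ler_pdivlMr ?mulr_gt0.
pose delta := rho / (2 * B).
have d0 : 0 < delta by rewrite divr_gt0 // mulr_gt0.
have dB : delta * (2 * B) = rho by rewrite /delta divfK // gt_eqF // mulr_gt0.
exists delta => // w Hgd.
have Hw : forall i b, `|w i b - u i b| <= delta.
  by move=> i b; apply: ltW; apply: le_lt_trans (gd_le u w i b) Hgd.
have r0 : 0 <= rho := ltW rho0.
have dd0 : 0 <= delta := ltW d0.
have rho1 : rho <= 1 by nra.
have hdr : delta * 2 <= rho by nra.
pose G := fun p : 'rV[R]_(nvars sigma) => p - (charf w ref p - T) *m K.
have Gc : forall p q, `|s - p| <= rho -> `|s - q| <= rho -> `|G p - G q| <= 2^-1 * `|p - q|.
  move=> p q hp hq.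
  have -> : G p - G q = - ((charf w ref p - charf w ref q - (p - q) *m J^T) *m K).
    rewrite /G (mulmxBl (charf w ref p - charf w ref q)) -(mulmxA (p - q)) mulmxV // mulmx1 !mulmxBl.
    move: (charf w ref p *m K) (charf w ref q *m K) (T *m K) => a b t.
    by apply/rowP => j; rewrite !mxE; ring.
  rewrite normrN; apply: le_trans (mulmx_norm _ _) _.
  have hE : `|charf w ref p - charf w ref q - (p - q) *m J^T| <=
      n' * (2 * K1 u * (rho + delta)) * `|p - q|.
    apply: mx_le_coord; first by rewrite !mulr_ge0 // addr_ge0.
    move=> r; rewrite entryBB; apply: lin_err => //.
    - by rewrite distrC.
    - by rewrite distrC.
  have hpq := normr_ge0 (p - q).
  apply: le_trans (ler_wpM2l _ hE) _; first by rewrite mulr_ge0.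
  rewrite -/kK -/n'.
  have e1 : P * rho <= B * rho by apply: ler_wpM2r => //; rewrite /B; lra.
  have e2 : P * delta * 2 <= P * rho by rewrite -mulrA; apply: ler_wpM2l.
  have : P * (rho + delta) <= 2^-1 by nra.
  rewrite /P => hh.
  set X := `|p - q| in hpq *.
  nra.
have hs1 : `|s| <= 1 by apply: sigvec_norm.
have GU : forall p, `|s - p| <= rho -> `|s - G p| <= rho.
  move=> p hp.
  have hsG : `|s - G s| <= Q * delta.
    have -> : s - G s = (charf w ref s - T) *m K.
      rewrite /G; move: ((charf w ref s - T) *m K) => X.
      by apply/rowP => j; rewrite !mxE; ring.
    apply: le_trans (mulmx_norm _ _) _.
    have hFT : `|charf w ref s - T| <= K1 u * (0 + delta).
      apply: mx_le_coord; first by rewrite mulr_ge0 // add0r.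
      move=> r; rewrite entryB; apply: charf_close => //.
      - lra.
      - by rewrite subrr normr0.
    apply: le_trans (ler_wpM2l _ hFT) _; first by rewrite mulr_ge0.
    by rewrite add0r /Q -/kK -/n' mulrA.
  have hss : `|s - s| <= rho by rewrite subrr normr0.
  have hc := Gc s p hss hp.
  have -> : s - G p = (s - G s) + (G s - G p).
    by move: (G s) (G p) => X Y; apply/rowP => j; rewrite !mxE; ring.
  apply: le_trans (ler_normD _ _) _.
  have e1 : Q * delta <= B * delta by apply: ler_wpM2r => //; rewrite /B; lra.
  have := normr_ge0 (s - p); rewrite distrC in hc *; nra.
have [pst [hpst Gp]] := fixpoint_ball rho0 GU Gc.
have FT : charf w ref pst = T.
  have h0 : (charf w ref pst - T) *m K = 0.
    have : pst - G pst = 0 by rewrite Gp subrr.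
    rewrite /G; move: ((charf w ref pst - T) *m K) => X <-.
    by apply/rowP => j; rewrite !mxE; ring.
  apply/eqP; rewrite -subr_eq0; apply/eqP.
  by rewrite -[charf w ref pst - T]mulmx1 -(mulVmx HJ) mulmxA h0 mul0mx.
have Frow : forall r, charf w ref pst 0 r = charf u ref s 0 r by move=> r; rewrite FT.
have hd : forall i (a : A i), `|pfun pst a - sigma i a| <= rho.
  move=> i a; rewrite -(pfun_s a H0); apply: le_trans (pfun_dist _ _ _) _.
  by rewrite distrC.
have hpos : forall i (a : A i), 0 < sigma i a -> 0 < pfun pst a.
  move=> i a h; have := Hm0 (Tagged A a) h; rewrite /= => hm.
  move: (hd i a); rewrite ler_norml => /andP[hl _]; lra.
have hzero : forall i (a : A i), ~~ (0 < sigma i a) -> pfun pst a = 0.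
  by move=> i a h; apply: pfun_out.
have hsum : forall i, \sum_(a : A i) pfun pst a = 1.
  move=> i; have [r Hr] := var_ex (Href i).
  have := Frow r; rewrite !mxE /= Hr /= eqxx => E.
  rewrite (bigID (fun b => 0 < sigma i b)) /= E [X in _ + X]big1 ?addr0; last first.
    by move=> b hb; apply: hzero.
  rewrite -(Hmix.2 i) [RHS](bigID (fun b => 0 < sigma i b)) /= [X in _ = _ + X]big1 ?addr0.
    by apply: eq_bigr => b _; apply: pfun_s.
  by move=> b hb; apply: sig0.
have heq : forall i (a : A i), 0 < sigma i a ->
    EUdev w (pfun pst) a = EUdev w (pfun pst) (ref i).
  move=> i a h; case: (eqVneq a (ref i)) => [->//|ne].
  have [r Hr] := var_ex h.
  have := Frow r; rewrite !mxE /= Hr /= (negbTE ne) => E.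
  have E2 : EUdev u (pfun s) (ref i) - EUdev u (pfun s) a = 0.
    have Es : forall b : A i, EUdev u (pfun s) b = EUdev u sigma b.
      by move=> b; apply: EUdev_ext => j c; apply: pfun_s.
    rewrite !Es.
    apply/eqP; rewrite subr_eq0 eq_le !(nash_support HN) //.
  by apply/eqP; rewrite eq_sym -subr_eq0 E E2.
have hclose : forall i (b : A i),
    `|EUdev w (pfun pst) b - EUdev u sigma b| <= Kc u * (rho + delta).
  move=> i b.
  have Hy3 : forall j (c : A j), `|sigma j c| <= 3.
    by move=> j c; rewrite ger0_norm //; apply: le_trans (H1 j c) _; lra.
  by apply: EUdev_close.
have hKr : Kc u * (rho + delta) <= Kc u * (2 * rho).
  by apply: ler_wpM2l => //; lra.
have e3 : Kc u * rho <= B * rho by apply: ler_wpM2r => //; rewrite /B; lra.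
have hlt : forall i (a : A i), ~~ (0 < sigma i a) ->
    EUdev w (pfun pst) a < EUdev w (pfun pst) (ref i).
  move=> i a h; have := Hg0 (Tagged A a) h; rewrite /= => hg.
  move: (hclose i a) (hclose i (ref i)); rewrite !ler_norml => /andP[k1 k2] /andP[k3 k4].
  nra.
have hle : forall i (a : A i), EUdev w (pfun pst) a <= EUdev w (pfun pst) (ref i).
  move=> i a; case h: (0 < sigma i a); first by rewrite heq.
  by apply: ltW; apply: hlt; rewrite h.
have hEUw : forall i, EU w (pfun pst) i = EUdev w (pfun pst) (ref i).
  move=> i; apply: EU_const => // a.
  case h: (0 < sigma i a); first by rewrite heq.
  by rewrite hzero ?h // !mul0r.
have hEUu : forall i, EU u sigma i = EUdev u sigma (ref i).
  move=> i; apply: EU_const; first exact: Hmix.2.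
  move=> a; case h: (0 < sigma i a).
    congr (_ * _); apply/eqP; rewrite eq_le !(nash_support HN) //.
  by rewrite sig0 ?h // !mul0r.
exists (pfun pst); split.
- split.
    split; last exact: hsum.
    move=> i a; case h: (0 < sigma i a); first exact: ltW (hpos _ _ h).
    by rewrite hzero ?h.
  move=> i tau Htau; rewrite hEUw; exact: EU_dev_le.
- move=> i a; case h: (0 < sigma i a); first exact: hpos.
  by rewrite hzero ?h ?ltxx.
- move=> i; rewrite hEUw hEUu.
  move: (hclose i (ref i)); rewrite ler_norml => /andP[_ k2].
  nra.
Qed.
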